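(* Let $A\in\mathbb{R}^{n\times n}$ be symmetric and let $X_0 = AWA$ for some matrix $W\in\mathbb{R}^{n\times n}$. Define iterates $$X_{k+1} = X_k + AS_k(S_k^\top A^2 S_k)^\dagger S_k^\top (A - A X_k A) S_k (S_k^\top A^2 S_k)^\dagger S_k^\top A,\qquad k\ge0,$$ for arbitrary matrices $S_k\in\mathbb{R}^{n\times\tau}$. Then for each $k\ge0$ there exists a matrix $Q_k$ such that $X_k - A^\dagger = A Q_k A$.
   Context: $A^\dagger$ denotes the Moore–Penrose pseudoinverse of $A$. *)

(* Defs.v *)
From HB Require Import structures.
From mathcomp Require Import all_boot all_algebra.
From mathcomp Require Import reals.
From Stdlib Require Import ClassicalEpsilon.
Set Implicit Arguments. Unset Strict Implicit. Unset Printing Implicit Defensive.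
Import GRing.Theory.
Local Open Scope ring_scope.

Definition is_MP_inverse (R : realType) (m n : nat)
    (A : 'M[R]_(m, n)) (B : 'M[R]_(n, m)) : Prop :=
  [/\ A *m B *m A = A, B *m A *m B = B,
      (A *m B)^T = A *m B & (B *m A)^T = B *m A].

(* The Moore–Penrose pseudoinverse A^dagger (exists and is unique over the reals). *)
Definition mpinv (R : realType) (m n : nat) (A : 'M[R]_(m, n)) : 'M[R]_(n, m) :=
  epsilon (inhabits 0) (is_MP_inverse A).

Fixpoint sketch_iter (R : realType) (n tau : nat) (A W : 'M[R]_n)
    (S : nat -> 'M[R]_(n, tau)) (k : nat) : 'M[R]_n :=
  match k with
  | 0 => A *m W *m A
  | k'.+1 =>
      let X := sketch_iter A W S k' in
      let Sk := S k' in
      let P := mpinv (Sk^T *m (A *m A) *m Sk) in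
      X + A *m Sk *m P *m Sk^T *m (A - A *m X *m A) *m Sk *m P *m Sk^T *m A
  end.

Arguments is_MP_inverse {R m n} A B.
Arguments mpinv {R m n} A.
Arguments sketch_iter {R n tau} A W S k.

(* Main.v *)
Require Import Defs.
From HB Require Import structures.
From mathcomp Require Import all_boot all_algebra.
From mathcomp Require Import reals.
From Stdlib Require Import ClassicalEpsilon.
Import GRing.Theory Num.Theory.
Local Open Scope ring_scope.
Set Implicit Arguments. Unset Strict Implicit.

Lemma vvT_eq0 (R : realType) k (v : 'rV[R]_k) : v *m v^T = 0 -> v = 0.
Proof.
move=> H; have := congr1 (fun M : 'M[R]_1 => M 0 0) H; rewrite !mxE => /eqP.
rewrite psumr_eq0; last by move=> j _; rewrite mxE -expr2 sqr_ge0.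
move=> /allP Hall; apply/matrixP => i j; rewrite mxE.
rewrite (ord1 i); have := Hall j (mem_index_enum _).
by rewrite mxE -expr2 sqrf_eq0 => /eqP.
Qed.

Lemma MMT_unit (R : realType) r k (M : 'M[R]_(r, k)) :
  row_free M -> M *m M^T \in unitmx.
Proof.
move=> fM; rewrite -row_free_unit; apply: inj_row_free => v Hv.
have : (v *m M) *m (v *m M)^T = 0.
  by rewrite trmx_mul mulmxA -(mulmxA v) Hv mul0mx.
by move/vvT_eq0 => /eqP; rewrite mulmx_free_eq0 // => /eqP.
Qed.

Lemma MP_factor (R : realType) m r n (C : 'M[R]_(m, r)) (F : 'M[R]_(r, n)) :
  F *m F^T \in unitmx -> C^T *m C \in unitmx ->
  is_MP_inverse (C *m F) (F^T *m invmx (F *m F^T) *m invmx (C^T *m C) *m C^T).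
Proof.
set G := F *m F^T; set H := C^T *m C => uG uH.
have GT : G^T = G by rewrite /G trmx_mul trmxK.
have HT : H^T = H by rewrite /H trmx_mul trmxK.
have kG p (Y : 'M_(r, p)) : F *m (F^T *m Y) = G *m Y by rewrite mulmxA.
have kH p (Y : 'M_(r, p)) : C^T *m (C *m Y) = H *m Y by rewrite mulmxA.
have lG p (Y : 'M_(r, p)) : G *m (invmx G *m Y) = Y by rewrite mulmxA mulmxV // mul1mx.
have lH p (Y : 'M_(r, p)) : invmx H *m (H *m Y) = Y by rewrite mulmxA mulVmx // mul1mx.
split.
- by rewrite -!mulmxA kG lG kH lH.
- by rewrite -!mulmxA kH lH kG lG.
- rewrite -!mulmxA kG lG !trmx_mul trmxK trmx_inv HT.
  by rewrite !mulmxA.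
- rewrite -!mulmxA kH lH !trmx_mul trmxK trmx_inv GT.
  by rewrite !mulmxA.
Qed.


Lemma MP_exists (R : realType) m n (A : 'M[R]_(m, n)) :
  exists B, is_MP_inverse A B.
Proof.
have fF : row_free (row_base A) by apply: row_base_free.
have fC : row_free (col_base A)^T.
  by rewrite /row_free mxrank_tr; have := col_base_full A.
have uG := MMT_unit fF.
have uH := MMT_unit fC; rewrite trmxK in uH.
have := MP_factor uG uH; rewrite mulmx_base => HB.
by eexists; exact: HB.
Qed.

Theorem lemma4 (R : realType) (n tau : nat) (A W : 'M[R]_n)
    (S : nat -> 'M[R]_(n, tau)) :
  A^T = A ->
  forall k : nat, exists Q : 'M[R]_n, (sketch_iter A W S k - mpinv A = A *m Q *m A)%R.
Proof.
move=> AT.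
have [B0 HB0] := MP_exists A.
have MP : is_MP_inverse A (mpinv A).
  by rewrite /mpinv; apply: epsilon_spec; exists B0.
set B := mpinv A in MP *.
case: MP => _ BAB ABT BAT.
have e1 : B *m A = A *m B^T by rewrite -BAT trmx_mul AT.
have e2 : A *m B = B^T *m A by rewrite -ABT trmx_mul AT.
have eB : B = A *m (B^T *m B *m B^T) *m A.
  have h1 : B = A *m B^T *m B by rewrite -e1 BAB.
  have h2 : B = B *m B^T *m A by rewrite -mulmxA -e2 mulmxA BAB.
  have h3 : A *m (B^T *m (B *m A *m B) *m B^T) *m A
     = (A *m B^T *m B) *m A *m (B *m B^T *m A) by rewrite !mulmxA.
  by rewrite BAB in h3; rewrite h3 -h1 -h2 BAB.
elim=> [|k [Q IH]] /=.
- exists (W - B^T *m B *m B^T).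
  by rewrite {1}eB mulmxBr mulmxBl !mulmxA.
- set X := sketch_iter A W S k in IH *.
  set P := mpinv _.
  exists (Q + S k *m P *m (S k)^T *m (A - A *m X *m A) *m S k *m P *m (S k)^T).
  set Y := S k *m P *m (S k)^T *m (A - A *m X *m A) *m S k *m P *m (S k)^T.
  have -> : A *m S k *m P *m (S k)^T *m (A - A *m X *m A) *m S k *m P *m (S k)^T *m A
     = A *m Y *m A by rewrite /Y !mulmxA.
  by rewrite addrAC IH -mulmxDl -mulmxDr.
Qed.
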